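(* Let $A\in\mathbb{R}^{m\times n}$ with $m\ge n$ and with nonzero rows $a_1^\top,\dots,a_m^\top$, let $x\in\mathbb{R}^n$ and $b:=Ax$. Fix $\beta\in[0,1)$, $M\in[0,1]$ and $l\in\{1,\dots,n\}$; let $\sigma_l$ be the $l$-th largest singular value of $A$ and $v_l$ an associated right singular vector. Given $x_0\in\mathbb{R}^n$ and $y_0=0$, define for $k\ge0$ $$x_{k+1}=x_k+\frac{b_{i_k}-\langle x_k,a_{i_k}\rangle}{\|a_{i_k}\|_2^2}a_{i_k}+My_k,\qquad y_{k+1}=\beta y_k+(1-\beta)(x_{k+1}-x_k),$$ with $i_0,i_1,\dots$ independent and $\mathbb{P}(i_k=i)=\|a_i\|_2^2/\|A\|_F^2$. Let $r:=1-\sigma_l^2/\|A\|_F^2+M(1-\beta)$, $\zeta:=M(1-\beta)^2$, and $$\lambda_1:=\frac{r+\beta+\sqrt{(r-\beta)^2-4\zeta}}{2}.$$ Suppose $\lambda_1$ is complex with nonzero imaginary part, i.e. $\lambda_1=\rho e^{i\theta}$ with $\rho>0$ and $0<\theta<\pi$. Then there exist constants $C$ and $\theta_0$, depending on $r,\zeta,\beta,v_l,x,x_0$, such that for all $k\ge0$, $$\mathbb{E}\langle x_{k+1}-x,v_l\rangle=C\rho^k\cos(k\theta+\theta_0).$$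
   Context: $\|\cdot\|_2$ is the Euclidean norm, $\|A\|_F$ the Frobenius norm, $b_i$ the $i$-th entry of $b$; expectation is over the random indices. When $(r-\beta)^2-4\zeta<0$ the square root is $i\sqrt{4\zeta-(r-\beta)^2}$. *)

(* Defs.v *)
From HB Require Import structures.
From mathcomp Require Import all_boot all_order all_algebra.
From mathcomp Require Import all_classical all_reals all_analysis.
Set Implicit Arguments. Unset Strict Implicit. Unset Printing Implicit Defensive.
Import Order.TTheory GRing.Theory Num.Theory.
Local Open Scope ring_scope.

Section Defs.
Variables (R : realType) (m n : nat).

Definition dotv (u w : 'cV[R]_n) : R := \sum_(j < n) u j 0 * w j 0.

Definition arow (A : 'M[R]_(m, n)) (i : 'I_m) : 'cV[R]_n := (row i A)^T.

Definition frob2 (A : 'M[R]_(m, n)) : R := \sum_(i < m) \sum_(j < n) A i j ^+ 2.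

Definition rowprob (A : 'M[R]_(m, n)) (i : 'I_m) : R :=
  dotv (arow A i) (arow A i) / frob2 A.

Definition singular_values_desc (A : 'M[R]_(m, n)) (s : 'I_n -> R) : Prop :=
  (forall j, 0 <= s j) /\
  (forall j k : 'I_n, (j <= k)%N -> s k <= s j) /\
  exists V : 'M[R]_n, V^T *m V = 1%:M /\
    A^T *m A = V *m diag_mx (\row_j (s j ^+ 2)) *m V^T.

Definition right_singular_vector (A : 'M[R]_(m, n)) (sigma : R) (v : 'cV[R]_n) :=
  v != 0 /\ A^T *m A *m v = (sigma ^+ 2) *: v.

Definition mrk_step (A : 'M[R]_(m, n)) (b : 'cV[R]_m) (beta M : R)
  (st : 'cV[R]_n * 'cV[R]_n) (i : 'I_m) : 'cV[R]_n * 'cV[R]_n :=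
  let: (xk, yk) := st in
  let a := arow A i in
  let x' := xk + ((b i 0 - dotv xk a) / dotv a a) *: a + M *: yk in
  (x', beta *: yk + (1 - beta) *: (x' - xk)).

Definition mrk_run (A : 'M[R]_(m, n)) (b : 'cV[R]_m) (beta M : R)
  (x0 : 'cV[R]_n) (s : seq 'I_m) : 'cV[R]_n * 'cV[R]_n :=
  foldl (mrk_step A b beta M) (x0, 0) s.

(* x_{k+1} for the index realization t = (i_0, ..., i_k) *)
Definition mrk_x (A : 'M[R]_(m, n)) (b : 'cV[R]_m) (beta M : R)
  (x0 : 'cV[R]_n) (k : nat) (t : {ffun 'I_k.+1 -> 'I_m}) : 'cV[R]_n :=
  (mrk_run A b beta M x0 [seq t j | j <- enum 'I_k.+1]).1.

(* E<x_{k+1} - x, v>, the expectation over the independent indices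
   i_0, ..., i_k with P(i_j = i) = rowprob A i *)
Definition mrk_expect (A : 'M[R]_(m, n)) (b : 'cV[R]_m) (beta M : R)
  (x0 x v : 'cV[R]_n) (k : nat) : R :=
  \sum_(t : {ffun 'I_k.+1 -> 'I_m})
     (\prod_(j < k.+1) rowprob A (t j)) * dotv (mrk_x A b beta M x0 t - x) v.

End Defs.

(* Main.v *)
Require Import Defs.
From HB Require Import structures.
From mathcomp Require Import all_boot all_order all_algebra.
From mathcomp Require Import all_classical all_reals all_analysis.
From mathcomp Require Import ring lra.
Import Order.TTheory GRing.Theory Num.Theory.
Set Implicit Arguments. Unset Strict Implicit. Unset Printing Implicit Defensive.
Local Open Scope ring_scope.

Section Aux.
Variables (R : realType) (m n : nat) (A : 'M[R]_(m, n)) (b : 'cV[R]_m) (beta M : R).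

Local Notation step := (mrk_step A b beta M).
Local Notation p := (rowprob A).

Fixpoint Wst (k : nat) (st : 'cV[R]_n * 'cV[R]_n) (phi : 'cV[R]_n * 'cV[R]_n -> R) : R :=
  if k is k'.+1 then \sum_i p i * Wst k' (step st i) phi else phi st.

Lemma Wst_sum k st phi :
  \sum_(t : {ffun 'I_k -> 'I_m}) (\prod_(j < k) p (t j)) *
     phi (foldl step st [seq t j | j <- enum 'I_k]) = Wst k st phi.
Proof.
elim: k st => [|k IH] st /=.
  rewrite (eq_bigr (fun _ => phi st)); last first.
    by move=> t _; rewrite big_ord0 mul1r enum_ord0.
  by rewrite sumr_const card_ffun !card_ord.

pose h (u : 'I_m * {ffun 'I_k -> 'I_m}) : {ffun 'I_k.+1 -> 'I_m} :=
  [ffun j => if unlift ord0 j is Some j' then u.2 j' else u.1].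
pose g (t : {ffun 'I_k.+1 -> 'I_m}) := (t ord0, [ffun j => t (lift ord0 j)]).
rewrite (reindex h); last first.
  exists g => [u _ | t _].
    case: u => i t; rewrite /g /h /=; congr pair; first by rewrite ffunE unlift_none.
    by apply/ffunP => j; rewrite !ffunE liftK.
  apply/ffunP => j; rewrite /g /h ffunE /=.
  by case: unliftP => [j' ->|->]; rewrite ?ffunE.
pose G i t := \prod_(j0 < k.+1) p (h (i, t) j0) *
      phi (foldl step st [seq h (i, t) j0 | j0 <- enum 'I_k.+1]).
rewrite (eq_bigr (fun u => G u.1 u.2)); last by case.
rewrite -pair_bigA /=; apply: eq_bigr => i _; rewrite /G.
rewrite -IH mulr_sumr; apply: eq_bigr => t _.
rewrite big_ord_recl enum_ordSl /= -map_comp.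
have E1 : h (i, t) ord0 = i by rewrite ffunE unlift_none.
have E2 : forall j, h (i, t) (lift ord0 j) = t j by move=> j; rewrite ffunE liftK.
rewrite E1 (eq_bigr (fun j => p (t j))); last by move=> j _; rewrite /= E2.
rewrite (eq_map (g := fun j => t j)); last by move=> j /=; rewrite E2.
by rewrite mulrA.
Qed.

Lemma Wst_ext k st phi psi : (forall s, phi s = psi s) -> Wst k st phi = Wst k st psi.
Proof.
move=> H; elim: k st => [|k IH] st /=; first exact: H.
by apply: eq_bigr => i _; rewrite IH.
Qed.

Lemma Wst_lin k st a c phi psi :
  Wst k st (fun s => a * phi s + c * psi s) = a * Wst k st phi + c * Wst k st psi.
Proof.
elim: k st => [|k IH] st //=.
rewrite !mulr_sumr -big_split; apply: eq_bigr => i _ /=.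
rewrite IH; ring.
Qed.

Lemma Wst_S k st phi :
  Wst k.+1 st phi = Wst k st (fun s => \sum_i p i * phi (step s i)).
Proof.
elim: k st => [|k IH] st //.
transitivity (\sum_i p i * Wst k.+1 (step st i) phi); first by [].
by apply: eq_bigr => i _; rewrite IH.
Qed.

End Aux.
Section Dot.
Variables (R : realType) (n : nat).
Implicit Types u w : 'cV[R]_n.
Lemma dotvE u w : dotv u w = (u^T *m w) 0 0.
Proof. by rewrite /dotv mxE; apply: eq_bigr => j _; rewrite mxE. Qed.
Lemma dotvDl u1 u2 w : dotv (u1 + u2) w = dotv u1 w + dotv u2 w.
Proof. by rewrite /dotv -big_split; apply: eq_bigr => j _; rewrite mxE mulrDl. Qed.
Lemma dotvBl u1 u2 w : dotv (u1 - u2) w = dotv u1 w - dotv u2 w.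
Proof. by rewrite /dotv -sumrB; apply: eq_bigr => j _; rewrite !mxE mulrBl. Qed.
Lemma dotvZl a u w : dotv (a *: u) w = a * dotv u w.
Proof. by rewrite /dotv mulr_sumr; apply: eq_bigr => j _; rewrite mxE mulrA. Qed.
Lemma dotvZr a u w : dotv u (a *: w) = a * dotv u w.
Proof. by rewrite /dotv mulr_sumr; apply: eq_bigr => j _; rewrite mxE mulrCA. Qed.
End Dot.

Section Step.
Variables (R : realType) (m n : nat) (A : 'M[R]_(m, n)) (x : 'cV[R]_n) (beta M : R).
Variables (v : 'cV[R]_n) (s2 : R).
Hypothesis hF : frob2 A != 0.
Hypothesis haa : forall i, dotv (arow A i) (arow A i) != 0.
Hypothesis hv : A^T *m A *m v = s2 *: v.
Local Notation step := (mrk_step A (A *m x) beta M).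
Local Notation p := (rowprob A).

Lemma bE i : (A *m x) i 0 = dotv x (arow A i).
Proof. by rewrite mxE /dotv; apply: eq_bigr => j _; rewrite /arow !mxE mulrC. Qed.

Lemma keyK u : \sum_i dotv u (arow A i) * dotv (arow A i) v = s2 * dotv u v.
Proof.
have E1 : forall w i, dotv w (arow A i) = (A *m w) i 0.
  by move=> w i; rewrite mxE /dotv; apply: eq_bigr => j _; rewrite /arow !mxE mulrC.
have E2 : forall w i, dotv (arow A i) w = (A *m w) i 0.
  by move=> w i; rewrite mxE /dotv; apply: eq_bigr => j _; rewrite /arow !mxE.
rewrite (eq_bigr (fun i => (A *m u) i 0 * (A *m v) i 0)); last by move=> i _; rewrite E1 E2.
have -> : \sum_i (A *m u) i 0 * (A *m v) i 0 = dotv (A *m u) (A *m v) by [].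
by rewrite dotvE trmx_mul; rewrite -mulmxA (mulmxA A^T) hv -dotvE dotvZr.
Qed.

Lemma psum1 : \sum_i p i = 1.
Proof.
rewrite /rowprob -mulr_suml.
have -> : \sum_i dotv (arow A i) (arow A i) = frob2 A.
  rewrite /frob2; apply: eq_bigr => i _; rewrite /dotv; apply: eq_bigr => j _.
  by rewrite /arow !mxE expr2.
by rewrite divff.
Qed.

Lemma P1 xk yk :
  \sum_i p i * dotv ((step (xk, yk) i).1 - x) v
  = (1 - s2 / frob2 A) * dotv (xk - x) v + M * dotv yk v.
Proof.
rewrite /mrk_step /=.
set e := dotv (xk - x) v; set f := dotv yk v.
rewrite (eq_bigr (fun i => p i * e + dotv (x - xk) (arow A i) * dotv (arow A i) v / frob2 A
   + p i * (M * f))); last first.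
  move=> i _.
  have -> : xk + ((A *m x) i 0 - dotv xk (arow A i)) / dotv (arow A i) (arow A i) *: arow A i
     + M *: yk - x = (xk - x) + ((A *m x) i 0 - dotv xk (arow A i)) / dotv (arow A i) (arow A i) *: arow A i
     + M *: yk.
    by rewrite addrAC [_ - x]addrAC.
  rewrite (@dotvBl _ _ x xk) dotvDl (@dotvDl _ _ (xk - x)) !dotvZl -/e -/f bE /rowprob.
  by field; rewrite haa hF.
have S1 : forall c, \sum_i p i * c = c.
  by move=> c; rewrite -(mulr_suml _ _ (fun i => p i)) psum1 mul1r.
rewrite !big_split /= !S1 -mulr_suml keyK.
have -> : dotv (x - xk) v = - e by rewrite /e !dotvBl; ring.
by field.
Qed.

Lemma P2 xk yk :
  \sum_i p i * dotv ((step (xk, yk) i).2) v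
  = (1 - beta) * ((1 - s2 / frob2 A) - 1) * dotv (xk - x) v
    + (beta + (1 - beta) * M) * dotv yk v.
Proof.
have H := P1 xk yk.
rewrite (eq_bigr (fun i => p i * (beta * dotv yk v) + (1 - beta) * (p i * dotv ((step (xk, yk) i).1 - x) v)
   - (1 - beta) * (p i * dotv (xk - x) v))); last first.
  move=> i _; rewrite /mrk_step /=.
  set x' := (X in X - xk).
  have -> : x' - xk = (x' - x) - (xk - x).
    by rewrite opprB addrA addrNK.
  rewrite (@dotvDl _ _ (beta *: yk)) !dotvZl (@dotvBl _ _ (x' - x)) -/x'; ring.
have S1 : forall c, \sum_i p i * c = c.
  by move=> c; rewrite -(mulr_suml _ _ (fun i => p i)) psum1 mul1r.
rewrite !big_split /= sumrN -!mulr_sumr !S1 H; ring.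
Qed.

End Step.
Lemma polar (R : realType) (a c : R) : exists C t : R, C * cos t = a /\ C * sin t = c.
Proof.
set C := Num.sqrt (a ^+ 2 + c ^+ 2).
have hC0 : 0 <= C by apply: sqrtr_ge0.
have hC2 : C ^+ 2 = a ^+ 2 + c ^+ 2 by rewrite sqr_sqrtr // addr_ge0 // sqr_ge0.
have [Cz|Cnz] := eqVneq C 0.
  have ha2 : a ^+ 2 = 0 by move: hC2; rewrite Cz; nra.
  have hc2 : c ^+ 2 = 0 by move: hC2; rewrite Cz; nra.
  have ha : a = 0 by move/eqP: ha2; rewrite sqrf_eq0 => /eqP.
  have hc : c = 0 by move/eqP: hc2; rewrite sqrf_eq0 => /eqP.
  by exists 0, 0; rewrite !mul0r ha hc.
have Cp : 0 < C by rewrite lt_def Cnz.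
set y := a / C.
have hy : -1 <= y <= 1.
  have h1 : - C <= a by nra.
  have h2 : a <= C by nra.
  rewrite /y; apply/andP; split.
    by rewrite ler_pdivlMr // mulN1r.
  by rewrite ler_pdivrMr // mul1r.
have [_ hcos] := acos_def hy.
have hsin := sin_acos hy.
have key : C * Num.sqrt (1 - y ^+ 2) = `|c|.
  rewrite -(ger0_norm hC0) -sqrtr_sqr -sqrtrM ?sqr_ge0 // -sqrtr_sqr; congr Num.sqrt.
  rewrite /y; transitivity (C ^+ 2 - a ^+ 2); first by field.
  by rewrite hC2; ring.
have [cge|clt] := leP 0 c.
  exists C, (acos y); split; first by rewrite hcos /y mulrCA divff // mulr1.
  by rewrite hsin key ger0_norm.
exists C, (- acos y); split; first by rewrite cosN hcos /y mulrCA divff // mulr1.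
by rewrite sinN hsin mulrN key ltr0_norm // opprK.
Qed.
Theorem corollary1p5 (R : realType) (m n : nat) (A : 'M[R]_(m, n))
  (hmn : (n <= m)%N) (hrows : forall i : 'I_m, row i A != 0)
  (x : 'cV[R]_n) (beta M : R)
  (hbeta : 0 <= beta < 1) (hM : 0 <= M <= 1)
  (s : 'I_n -> R) (hs : singular_values_desc A s)
  (l : 'I_n) (v : 'cV[R]_n) (hv : right_singular_vector A (s l) v)
  (x0 : 'cV[R]_n) (rho theta : R) :
  let b := A *m x in
  let r := 1 - s l ^+ 2 / frob2 A + M * (1 - beta) in
  let zeta := M * (1 - beta) ^+ 2 in
  (r - beta) ^+ 2 - 4 * zeta < 0 ->
  0 < rho -> 0 < theta < pi ->
  rho * cos theta = (r + beta) / 2 ->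
  rho * sin theta = Num.sqrt (4 * zeta - (r - beta) ^+ 2) / 2 ->
  exists C theta0 : R, forall k : nat,
    mrk_expect A b beta M x0 x v k
      = C * rho ^+ k * cos (k%:R * theta + theta0).
Proof.
move=> b r zeta hneg hrho htheta hcos hsin.
have haa : forall i, dotv (arow A i) (arow A i) != 0.
  move=> i; apply/negP => /eqP H; move/negP: (hrows i); apply.
  apply/eqP/matrixP => i' j; rewrite !mxE.
  have H0 : forall j : 'I_n, true -> 0 <= arow A i j 0 * arow A i j 0.
    by move=> j' _; rewrite -expr2 sqr_ge0.
  have := psumr_eq0P H0 H (i:=j) isT.
  by rewrite /arow !mxE; move/eqP; rewrite mulf_eq0 orbb => /eqP.
have hF : frob2 A != 0.
  have i0 : 'I_m := Ordinal (leq_trans (ltn_ord l) hmn).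
  have -> : frob2 A = \sum_i dotv (arow A i) (arow A i).
    rewrite /frob2; apply: eq_bigr => i _; rewrite /dotv; apply: eq_bigr => j _.
    by rewrite /arow !mxE expr2.
  apply/negP => /eqP H.
  have H0 : forall i : 'I_m, true -> 0 <= dotv (arow A i) (arow A i).
    by move=> i _; apply: sumr_ge0 => j _; rewrite -expr2 sqr_ge0.
  by move: (haa i0); rewrite (psumr_eq0P H0 H (i:=i0) isT) eqxx.
have hv' : A^T *m A *m v = s l ^+ 2 *: v by case: hv.
set q := 1 - s l ^+ 2 / frob2 A.
pose e k := Wst A b beta M k (x0, 0) (fun st => dotv (st.1 - x) v).
pose f k := Wst A b beta M k (x0, 0) (fun st => dotv st.2 v).
have he : forall k, e k.+1 = q * e k + M * f k.
  move=> k; rewrite /e Wst_S -Wst_lin; apply: Wst_ext => -[xk yk].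
  exact: P1.
have hf : forall k, f k.+1 = (1 - beta) * (q - 1) * e k + (beta + (1 - beta) * M) * f k.
  move=> k; rewrite /f Wst_S -Wst_lin; apply: Wst_ext => -[xk yk].
  exact: P2.
have hexp : forall k, mrk_expect A b beta M x0 x v k = e k.+1.
  move=> k; rewrite /mrk_expect /mrk_x /mrk_run /e.
  exact: (Wst_sum A b beta M k.+1 (x0, 0) (fun st => dotv (st.1 - x) v)).
pose g k := e k.+1.
have hg : forall k, g k.+2 = (r + beta) * g k.+1 - (r * beta + zeta) * g k.
  move=> k; rewrite /g.
  have E2 : M * f k.+1 = e k.+2 - q * e k.+1 by rewrite he; ring.
  rewrite he hf.
  transitivity (q * e k.+2 + M * ((1 - beta) * (q - 1)) * e k.+1
     + (beta + (1 - beta) * M) * (M * f k.+1)); first by ring.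
  rewrite E2 /r /zeta /q; ring.
have hX : 0 <= 4 * zeta - (r - beta) ^+ 2 by lra.
have hrho2 : rho ^+ 2 = r * beta + zeta.
  have h1 : (rho * sin theta) ^+ 2 = (4 * zeta - (r - beta) ^+ 2) / 4.
    by rewrite hsin expr_div_n sqr_sqrtr //; field.
  transitivity ((rho * cos theta) ^+ 2 + (rho * sin theta) ^+ 2).
    by rewrite -[LHS]mulr1 -(cos2Dsin2 theta); ring.
  by rewrite h1 hcos; field.
have hsinp : 0 < sin theta by apply: sin_gt0_pi.
have hT : r + beta = 2 * (rho * cos theta) by rewrite hcos; field.
pose a := g 0%N.
pose bb := (g 1%N - rho * cos theta * g 0%N) / (rho * sin theta).
have hS : forall j : nat, j.+1%:R * theta = j%:R * theta + theta :> R.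
  by move=> j; rewrite -addn1 natrD mulrDl mul1r.
have Q : forall k, g k = rho ^+ k * (a * cos (k%:R * theta) + bb * sin (k%:R * theta))
          /\ g k.+1 = rho ^+ k.+1 * (a * cos (k.+1%:R * theta) + bb * sin (k.+1%:R * theta)).
  elim => [|k [IH1 IH2]].
    rewrite mul0r cos0 sin0 expr0 mul1r expr1 /bb /a; split; first by ring.
    have -> : (1%:R * theta) = theta :> R by rewrite mul1r.
    by field; rewrite !gt_eqF.
  split; first exact: IH2.
  rewrite hg IH1 IH2 hT -hrho2.
  set X := k.+1%:R * theta.
  have -> : k.+2%:R * theta = X + theta by rewrite hS.
  have -> : k%:R * theta = X - theta by rewrite /X hS addrK.
  rewrite cosB sinB cosD sinD !exprS; ring.
have [C [t0 [hC1 hC2]]] := polar a (- bb).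
exists C, t0 => k.
rewrite hexp -/(g k) (Q k).1 cosD.
have -> : a = C * cos t0 by [].
have -> : bb = - (C * sin t0) by rewrite hC2 opprK.
ring.
Qed.
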